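(* Let $(G,L)$ be a labelled edge-coloured digraph. Then, in $\mathrm{NCQSym}(\mathbf{x})$, $$\Delta(\mathscr{Y}_{(G,L)}(\mathbf{x}))=\sum_F\mathscr{Y}_{(G|_{V(G)-V(F)},\,L_{V(G)-V(F)})}(\mathbf{x})\otimes\mathscr{Y}_{(F,\,L_{V(F)})}(\mathbf{x}),$$ where the sum runs over all $\{\rightarrow,\Rightarrow\}$-induced subdigraphs $F$ of $G$.
   Context: An edge-coloured digraph is a finite simple digraph with each edge dashed ($\dashrightarrow$), solid ($\rightarrow$) or double ($\Rightarrow$); a proper vertex-colouring is $\kappa:V\to\mathbb{P}$ with $\kappa(a)\ne\kappa(b)$, $\kappa(a)<\kappa(b)$, $\kappa(a)\le\kappa(b)$ for dashed, solid, double edges $(a,b)$ respectively. A labelled edge-coloured digraph $(G,L)$ has a bijection $L:V(G)\to[|V(G)|]$, and $\mathscr{Y}_{(G,L)}(\mathbf{x})=\sum_\kappa\mathbf{x}_{\kappa(L^{-1}(1))}\cdots\mathbf{x}_{\kappa(L^{-1}(|V(G)|))}$ over proper vertex-colourings, in noncommuting variables (equal to $1$ for the empty digraph). For $A\subseteq V(G)$, $G|_A$ is the induced subdigraph on $A$ with edge types kept, and $L_A:A\to[|A|]$ is $L_A(a)=\mathrm{std}_B(L(a))$ where $B=L(A)$ and $\mathrm{std}_B:B\to[|B|]$ is the unique order-preserving bijection. An induced subdigraph $F$ is $\{\rightarrow,\Rightarrow\}$-induced if $a\in V(F)$ and $a\rightarrow b$ or $a\Rightarrow b$ in $G$ imply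 $b\in V(F)$. $\mathrm{NCQSym}(\mathbf{x})$ is the space of bounded-degree series $f$ in noncommuting $\mathbf{x}$ such that for each set composition $\Phi=(\Phi_1|\cdots|\Phi_k)$ of $[n]$ all monomials $\mathbf{x}_{i_1}\cdots\mathbf{x}_{i_n}$ with $i_j=i_\ell$ for $j,\ell$ in a common block and $i_j<i_\ell$ for $j\in\Phi_p,\ell\in\Phi_q$, $p<q$, have equal coefficients; its coproduct evaluates $f$ on $\mathbf{x}_1<\mathbf{x}_2<\cdots<\mathbf{y}_1<\mathbf{y}_2<\cdots$, imposes $\mathbf{x}_i\mathbf{y}_j=\mathbf{y}_j\mathbf{x}_i$, reads the result as $\sum f_1(\mathbf{x})\otimes f_2(\mathbf{y})$ and replaces $\mathbf{y}$ by $\mathbf{x}$. *)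

(* Defs.v *)
From mathcomp Require Import all_boot.
Set Implicit Arguments. Unset Strict Implicit. Unset Printing Implicit Defensive.

(* Conventions:
   - a monomial x_{i_1} ... x_{i_n} in noncommuting variables is a word
     [:: i_1 - 1; ...; i_n - 1] : seq nat (letter k stands for x_{k+1});
   - a series is its coefficient function  seq nat -> nat;
   - labels in [n] are 0-indexed: L : V -> 'I_n, label j stands for j+1. *)

Inductive etype := Dashed | Solid | Double.

Definition series := seq nat -> nat.

Definition proper (V : finType) (E : V -> V -> option etype) (k : V -> nat) :=
  [forall a, forall b,
     match E a b with
     | Some Dashed => k a != k b
     | Some Solid => k a < k b
     | Some Double => k a <= k b
     | None => true
     end].

(* Y_{(G,L)}: the coefficient of the word w is the number of proper
   colourings k with k (L^-1 j) = w_j for all j; for bijective L there is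
   exactly one candidate colouring, namely k = w o L. *)
Definition Yser (V : finType) (E : V -> V -> option etype) (L : V -> nat)
  : series :=
  fun w => ((size w == #|V|) && proper E (fun v => nth 0 w (L v)) : nat).

Definition subT (V : finType) (A : {set V}) := {v : V | v \in A}.

Definition induced_edges (V : finType) (E : V -> V -> option etype)
  (A : {set V}) : subT A -> subT A -> option etype :=
  fun x y => E (val x) (val y).

Definition std_lab (V : finType) (L : V -> nat) (A : {set V}) : subT A -> nat :=
  fun x => #|[set b in A | L b < L (val x)]|.

Arguments induced_edges {V} E A.
Arguments std_lab {V} L A.

Definition Ysub (V : finType) (E : V -> V -> option etype) (L : V -> nat)
  (A : {set V}) : series :=
  Yser (induced_edges E A) (std_lab L A).

Definition arrow_closed (V : finType) (E : V -> V -> option etype)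
  (A : {set V}) : bool :=
  [forall a, forall b,
     (a \in A) && (match E a b with
                     | Some Solid | Some Double => true
                     | _ => false end) ==> (b \in A)].

(* NCQSym: bounded degree and equal coefficients on words with the same
   set-composition pattern *)
Definition same_pattern (w1 w2 : seq nat) : bool :=
  (size w1 == size w2) &&
  [forall j : 'I_(size w1), forall l : 'I_(size w1),
     ((nth 0 w1 j == nth 0 w1 l) == (nth 0 w2 j == nth 0 w2 l)) &&
     ((nth 0 w1 j < nth 0 w1 l) == (nth 0 w2 j < nth 0 w2 l))].

Definition isNCQSym (f : series) : Prop :=
  (exists d, forall w, d < size w -> f w = 0) /\
  (forall w1 w2, same_pattern w1 w2 -> f w1 = f w2).

(* The word over x_1 < x_2 < ... < y_1 < y_2 < ... obtained by interleaving
   u (x-letters, at positions S) and v (y-letters); the y-letters are sent to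
   M + letter with M above every letter of u, so the order x < y is kept
   (for f in NCQSym, the coefficient of f(X+Y) only depends on this order). *)
Definition shuffle_word (u v : seq nat) (S : {set 'I_(size u + size v)})
  : seq nat :=
  let M := (\max_(i <- u) i).+1 in
  [seq (if k \in S then nth 0 u #|[set j in S | j < k]|
        else M + nth 0 v #|[set j | (j \notin S) && (j < k)]|)
  | k <- enum 'I_(size u + size v)].

Arguments shuffle_word : clear implicits.

(* coefficient of u(x) (x) v(x) in Delta f *)
Definition coprod (f : series) (u v : seq nat) : nat :=
  \sum_(S : {set 'I_(size u + size v)} | #|S| == size u) f (shuffle_word u v S).

(* Main.v *)
Require Import Defs.
From mathcomp Require Import all_boot.
Set Implicit Arguments. Unset Strict Implicit. Unset Printing Implicit Defensive.

Definition rel_ok (e : option etype) (x y : nat) : bool :=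
  match e with
  | Some Dashed => x != y
  | Some Solid => x < y
  | Some Double => x <= y
  | None => true end.

Lemma properE (V : finType) (E : V -> V -> option etype) (k : V -> nat) :
  Defs.proper E k = [forall a, forall b, rel_ok (E a b) (k a) (k b)].
Proof. by []. Qed.

Lemma rel_ok_add M e x y : rel_ok e (M + x) (M + y) = rel_ok e x y.
Proof. by case: e => [[]|] /=; rewrite ?eqn_add2l ?ltn_add2l ?leq_add2l. Qed.

Lemma rel_ok_lt e x y : x < y -> rel_ok e x y.
Proof. case: e => [[]|] //= h; first by rewrite neq_ltn h. exact: ltnW. Qed.

Lemma rel_ok_gt e x y : y < x ->
  rel_ok e x y = (match e with Some Solid | Some Double => false | _ => true end).
Proof.
case: e => [[]|] //= h; first by rewrite neq_ltn h orbT.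
  by rewrite ltnNge ltnW.
by rewrite leqNgt h.
Qed.

Lemma ncq (V : finType) E (L : V -> nat) (HL : forall v, L v < #|V|) :
  isNCQSym (Yser E L).
Proof.
split.
  exists #|V| => w hw; rewrite /Yser.
  have : size w != #|V| by rewrite neq_ltn hw orbT.
  by move/negbTE => ->.
move=> w1 w2 /andP [/eqP hs hp]; rewrite /Yser -hs.
case: (boolP (size w1 == #|V|)) => //= /eqP h1.
congr (nat_of_bool _).
rewrite !properE; apply: eq_forallb => a; apply: eq_forallb => b.
have ha : L a < size w1 by rewrite h1.
have hb : L b < size w1 by rewrite h1.
have /andP [/eqP e1 /eqP l1] := forallP (forallP hp (Ordinal ha)) (Ordinal hb).
have /andP [_ /eqP l2] := forallP (forallP hp (Ordinal hb)) (Ordinal ha).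
case: (E a b) => [[]|] /=.
- by congr negb; exact: e1.
- exact: l1.
- by rewrite leqNgt [in RHS]leqNgt; congr negb; exact: l2.
- by [].
Qed.

Lemma key (V : finType) (E : V -> V -> option etype) (A : {set V})
  (k ku kv : V -> nat) M :
  (forall x, x \in A -> k x = M + kv x) -> (forall x, x \notin A -> k x = ku x) ->
  (forall x, ku x < M) ->
  Defs.proper E k = [&& arrow_closed E A,
     Defs.proper (induced_edges E (~:A)) (fun y => ku (val y)) &
     Defs.proper (induced_edges E A) (fun y => kv (val y))].
Proof.
move=> kA kC hM.
have ltM : forall a b, ku a < M + kv b.
  by move=> a b; apply: leq_trans (hM a) (leq_addr _ _).
rewrite !properE; apply/idP/idP.
- move=> hp; apply/and3P; split.
  + apply/forallP => a; apply/forallP => b; apply/implyP => /andP [ha he].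
    apply/negPn/negP => hb.
    have := forallP (forallP hp a) b.
    rewrite (kA a ha) (kC b hb) rel_ok_gt //.
    by move: he; case: (E a b) => [[]|].
  + apply/forallP => x; apply/forallP => y.
    have hx : val x \notin A by move: (valP x); rewrite inE.
    have hy : val y \notin A by move: (valP y); rewrite inE.
    by have := forallP (forallP hp (val x)) (val y); rewrite (kC _ hx) (kC _ hy).
  + apply/forallP => x; apply/forallP => y.
    have := forallP (forallP hp (val x)) (val y).
    by rewrite (kA _ (valP x)) (kA _ (valP y)) rel_ok_add.
- case/and3P => hc pC pA.
  apply/forallP => a; apply/forallP => b.
  case: (boolP (a \in A)) => ha; case: (boolP (b \in A)) => hb.
  + have := forallP (forallP pA (exist _ a ha)) (exist _ b hb).
    by rewrite /= (kA _ ha) (kA _ hb) rel_ok_add.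
  + rewrite (kA _ ha) (kC _ hb) rel_ok_gt //.
    have := forallP (forallP hc a) b; rewrite ha (negbTE hb) /=.
    by case: (E a b) => [[]|].
  + by rewrite (kA _ hb) (kC _ ha) rel_ok_lt.
  + have ha' : a \in ~: A by rewrite inE.
    have hb' : b \in ~: A by rewrite inE.
    have := forallP (forallP pC (exist _ a ha')) (exist _ b hb').
    by rewrite /= (kC _ ha) (kC _ hb).
Qed.

Lemma nth_lt_max (u : seq nat) i : nth 0 u i < (\max_(j <- u) j).+1.
Proof.
rewrite ltnS; case: (ltnP i (size u)) => hi.
  by apply: (@leq_bigmax_seq _ u xpredT (fun j => j)); rewrite ?mem_nth.
by rewrite nth_default.
Qed.

Lemma card_pre (V : finType) n (L : V -> 'I_n) g (Lg : cancel L g) (gL : cancel g L)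
  (p : pred V) : #|[set j | p (g j)]| = #|[set x | p x]|.
Proof.
have -> : [set j | p (g j)] = L @: [set x | p x].
  apply/setP => j; rewrite inE; apply/idP/imsetP.
    by move=> h; exists (g j); rewrite ?inE ?gL.
  by case=> x; rewrite inE => hx ->; rewrite Lg.
by rewrite card_imset //; apply: can_inj Lg.
Qed.

Lemma coprod_ne (V : finType) E (LL : V -> nat) u v :
  #|V| != size u + size v ->
  coprod (Yser E LL) u v = \sum_(A : {set V} | arrow_closed E A)
       Ysub E LL (~: A) u * Ysub E LL A v.
Proof.
move=> hne; rewrite /coprod big1; last first.
  move=> S _; rewrite /Yser /shuffle_word size_map size_enum_ord.
  by rewrite eq_sym (negbTE hne).
apply/esym/big1 => A _; rewrite /Ysub /Yser !card_sig.
case: eqP => //= hu; case: eqP => //= hv; rewrite ?muln0 ?mul0n //.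
by move: hne; rewrite hu hv addnC cardsC eqxx.
Qed.

Lemma coprod_eq (V : finType) E u v (L : V -> 'I_(size u + size v))
  (Lb : bijective L) (hV : #|V| = size u + size v) :
  coprod (Yser E (fun x => nat_of_ord (L x))) u v =
  \sum_(A : {set V} | arrow_closed E A)
     Ysub E (fun x => nat_of_ord (L x)) (~: A) u *
     Ysub E (fun x => nat_of_ord (L x)) A v.
Proof.
case: Lb => g Lg gL.
set LL := fun x => nat_of_ord (L x).
rewrite /coprod.
pose h := fun A : {set V} => [set j | g j \notin A].
pose h' := fun S : {set 'I_(size u + size v)} => [set x | L x \notin S].
have hK : cancel h h' by move=> A; apply/setP => x; rewrite !inE Lg negbK.
have h'K : cancel h' h by move=> S; apply/setP => x; rewrite !inE gL negbK.
rewrite (reindex h); last by exists h' => ? _.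
rewrite big_mkcond [RHS]big_mkcond; apply: eq_bigr => A _.
have hc : #|h A| = #|~: A|.
  rewrite (card_pre Lg gL (fun x => x \notin A)); apply: eq_card => x.
  by rewrite !inE.
set M := (\max_(i <- u) i).+1.
set w := shuffle_word u v (h A).
have hw : forall x, nth 0 w (L x) =
   if x \in A then M + nth 0 v #|[set b in A | LL b < LL x]|
   else nth 0 u #|[set b in ~: A | LL b < LL x]|.
  move=> x; rewrite /w /shuffle_word (nth_map (L x)) ?size_enum_ord ?ltn_ord //.
  rewrite nth_ord_enum inE Lg.
  case: (boolP (x \in A)) => hx /=.
    congr (M + nth 0 v _).
    transitivity #|[set j | (g j \in A) && (LL (g j) < LL x)]|.
      by apply: eq_card => j; rewrite !inE negbK /LL gL.
    rewrite (card_pre Lg gL (fun b => (b \in A) && (LL b < LL x))).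
    by apply: eq_card => j; rewrite !inE.
  congr (nth 0 u _).
  transitivity #|[set j | (g j \in ~: A) && (LL (g j) < LL x)]|.
    by apply: eq_card => j; rewrite !inE /LL gL.
  rewrite (card_pre Lg gL (fun b => (b \in ~: A) && (LL b < LL x))).
  by apply: eq_card => j; rewrite !inE.
rewrite hc /Ysub /Yser !card_sig.
have eC : #|[pred x in ~: A]| = #|~: A| by apply: eq_card.
have eA : #|[pred x in A]| = #|A| by apply: eq_card.
rewrite eC eA.
case: (eqVneq #|~: A| (size u)) => hu; last first.
  by case: (arrow_closed E A).
have hv : #|A| = size v.
  by apply/eqP; rewrite -(eqn_add2l #|~: A|) addnC cardsC hu hV.
have hs : size w = #|V| by rewrite /w /shuffle_word size_map size_enum_ord hV.
rewrite hv hs !eqxx /=.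
rewrite (@key _ E A (fun v0 => nth 0 w (LL v0))
   (fun x => nth 0 u #|[set b in ~: A | LL b < LL x]|)
   (fun x => nth 0 v #|[set b in A | LL b < LL x]|) M); first last.
- by move=> x; apply: nth_lt_max.
- by move=> x hx; rewrite /LL hw (negbTE hx).
- by move=> x hx; rewrite /LL hw hx.
case: (arrow_closed E A) => //=.
by case: (Defs.proper (induced_edges E (~: A)) _); case: (Defs.proper (induced_edges E A) _).
Qed.

Theorem mainTheorem10 (V : finType) (E : V -> V -> option etype)
  (L : V -> 'I_#|V|)
  (noloop : forall v, E v v = None) (Lbij : bijective L) :
  let LL := fun v => nat_of_ord (L v) in
  isNCQSym (Yser E LL) /\
  forall u v : seq nat,
    coprod (Yser E LL) u v =
    \sum_(A : {set V} | arrow_closed E A)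
       Ysub E LL (~: A) u * Ysub E LL A v.
Proof.
move=> LL; split; first by apply: ncq => x; exact: ltn_ord.
move=> u v; case: (eqVneq #|V| (size u + size v)) => hV; last exact: coprod_ne.
have Lb : bijective (fun x => cast_ord hV (L x)).
  case: Lbij => g Lg gL; exists (fun j => g (cast_ord (esym hV) j)) => x.
    by rewrite cast_ordK Lg.
  by rewrite gL cast_ordKV.
exact: (coprod_eq E Lb hV).
Qed.
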